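(* Let $H$ be a complex Hilbert space and let $U_0(H)$ be the set of unitary operators on $H$ which fix each element of the orthogonal complement of some finite-dimensional subspace of $H$. Then $d(u,v) := \mathrm{rank}(u - v)$ defines a distance on $U_0(H)$ with values in the nonnegative integers. Moreover, if $F \subset E$ are finite-dimensional subspaces of $H$ and $u$ is a unitary operator fixing each element of $E^{\perp}$, then $\pi_{E,F}(u)$ is the unique unitary operator fixing each element of $F^{\perp}$ for which $d(u, \pi_{E,F}(u))$ is minimal (among unitary operators fixing each element of $F^\perp$); the image of $H$ by $u - \pi_{E,F}(u)$ equals the image of $F^{\perp}$ by $u - \mathrm{Id}$; and $$d(u, \pi_{E,F}(u)) = \dim(E) - \dim(F) - \dim(\{x \in E \cap F^{\perp} : u(x) = x\}).$$ In particular, if no nonzero $x \in E\cap F^\perp$ satisfies $u(x)=x$, then $d(u,\pi_{E,F}(u)) = \dim(E) - \dim(F)$.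
   Context: For a complex Hilbert space $H$, a finite-dimensional subspace $E$, a subspace $F\subset E$ and a unitary $u$ on $H$ fixing each element of $E^\perp$, $\pi_{E,F}(u)$ denotes the unique unitary operator on $H$ which fixes each element of $F^\perp$ and such that the image of $H$ by $u-\pi_{E,F}(u)$ is included in the image of $F^\perp$ by $u-\mathrm{Id}$ (existence and uniqueness are known). *)

(* Defs.v *)
From mathcomp Require Import all_boot all_algebra.
From mathcomp Require Import boolp classical_sets reals.
From mathcomp Require Import complex.
From Stdlib Require Import ClassicalEpsilon.
Set Implicit Arguments. Unset Strict Implicit. Unset Printing Implicit Defensive.
Import GRing.Theory Num.Theory.
Local Open Scope ring_scope.
Local Open Scope classical_set_scope.

Section Hilbert.
Variables (R : realType) (V : lmodType R[i]) (ip : V -> V -> R[i]).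

Definition cauchy_seq (s : nat -> V) : Prop :=
  forall e : R[i], 0 < e -> exists N : nat, forall m n : nat,
    (N <= m)%N -> (N <= n)%N -> ip (s m - s n) (s m - s n) < e.

Definition converges_to (s : nat -> V) (l : V) : Prop :=
  forall e : R[i], 0 < e -> exists N : nat, forall n : nat,
    (N <= n)%N -> ip (s n - l) (s n - l) < e.

Definition hilbert_space : Prop :=
  [/\ (forall (a : R[i]) (x y z : V), ip (a *: x + y) z = a * ip x z + ip y z),
      (forall x y : V, ip y x = (ip x y)^*),
      (forall x : V, 0 <= ip x x),
      (forall x : V, ip x x = 0 -> x = 0) &
      (forall s : nat -> V, cauchy_seq s -> exists l, converges_to s l)].

Definition subspace (S : set V) : Prop :=
  S 0 /\ forall (a : R[i]) (x y : V), S x -> S y -> S (a *: x + y).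

Definition has_dim (S : set V) (n : nat) : Prop :=
  exists b : 'I_n -> V,
    [/\ (forall i, S (b i)),
        (forall c : 'I_n -> R[i], \sum_(i < n) c i *: b i = 0 -> forall i, c i = 0) &
        (forall x, S x -> exists c : 'I_n -> R[i], x = \sum_(i < n) c i *: b i)].

Definition findim (S : set V) : Prop := exists n, has_dim S n.

(* the dimension of a finite-dimensional subspace (junk value 0 otherwise) *)
Definition sdim (S : set V) : nat := xget 0%N (has_dim S).

Definition orth (S : set V) : set V := [set x | forall y, S y -> ip x y = 0].

Definition fixes (u : V -> V) (S : set V) : Prop := forall x, S x -> u x = x.

Definition unitary (u : V -> V) : Prop :=
  [/\ (forall (a : R[i]) (x y : V), u (a *: x + y) = a *: u x + u y),
      (forall x y, ip (u x) (u y) = ip x y) &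
      (forall y, exists x, u x = y)].

Definition U0 : set (V -> V) :=
  [set u | unitary u /\ exists E, [/\ subspace E, findim E & fixes u (orth E)]].

Definition op_rank (w : V -> V) : nat := sdim (range w).

Definition dist (u v : V -> V) : nat := op_rank (fun x => u x - v x).

(* pi_{E,F}(u): the unitary operator fixing F^perp such that
   (u - pi_{E,F}(u))(H) is included in (u - Id)(F^perp) (unique, known to exist). *)
Definition is_piEF (E F : set V) (u w : V -> V) : Prop :=
  [/\ unitary w, fixes w (orth F) &
      range (fun x => u x - w x) `<=` (fun x => u x - x) @` (orth F)].

Definition piEF (E F : set V) (u : V -> V) : V -> V :=
  epsilon (inhabits (fun x : V => x)) (is_piEF E F u).

End Hilbert.

(* Main.v *)
Require Import Defs.
From mathcomp Require Import all_boot all_algebra.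
From mathcomp Require Import boolp classical_sets reals.
From mathcomp Require Import complex.
From Stdlib Require Import ClassicalEpsilon.
Import GRing.Theory Num.Theory.
Local Open Scope ring_scope.
Local Open Scope classical_set_scope.
From mathcomp Require Import ring.
Set Implicit Arguments. Unset Strict Implicit. Unset Printing Implicit Defensive.

Section LinAlg.
Variables (R : realType) (V : lmodType R[i]).
Local Notation K := (R[i]).
Implicit Types (S A B : set V) (x y : V).

Definition span n (b : 'I_n -> V) : set V :=
  [set x | exists c : 'I_n -> K, x = \sum_(i < n) c i *: b i].
Definition indep n (b : 'I_n -> V) : Prop :=
  forall c : 'I_n -> K, \sum_(i < n) c i *: b i = 0 -> forall i, c i = 0.

Lemma indep_le n m (b : 'I_n -> V) (s : 'I_m -> V) :
  indep b -> (forall j, span s (b j)) -> (n <= m)%N.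
Proof.
move=> ib hs.
have [f hf] : exists f : 'I_n -> 'I_m -> K, forall j, b j = \sum_(i < m) f j i *: s i.
  have [f hf] := (@choice _ _ (fun j c => b j = \sum_(i < m) c i *: s i) hs).
  by exists f.
rewrite leqNgt; apply/negP => lt.
pose A := \matrix_(j < n, i < m) f j i.
have : kermx A != 0.
  rewrite kermx_eq0 /row_free; apply/negP => /eqP e.
  by move: (rank_leq_col A); rewrite e leqNgt lt.
move/rowV0Pn => [v /sub_kermxP vA vn0].
have : \sum_j v 0 j *: b j = 0.
  under eq_bigr => j _ do rewrite hf scaler_sumr.
  rewrite exchange_big /=.
  rewrite (eq_bigr (fun i => (v *m A) 0 i *: s i)).
    by rewrite vA big1 // => i _; rewrite mxE scale0r.
  move=> i _; rewrite !mxE scaler_suml; apply: eq_bigr => j _.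
  by rewrite scalerA mxE.
move/ib => h; apply/negP: vn0; rewrite negbK; apply/eqP/matrixP => i j.
by rewrite !mxE (ord1 i) h.
Qed.


Lemma sub0 S : subspace S -> S 0. Proof. by case. Qed.
Lemma subD S x y : subspace S -> S x -> S y -> S (x + y).
Proof. by case=> _ h ??; rewrite -[x]scale1r; apply: h. Qed.
Lemma subZ S a x : subspace S -> S x -> S (a *: x).
Proof. by case=> h0 h ?; rewrite -[_ *: _]addr0; apply: h. Qed.
Lemma subN S x : subspace S -> S x -> S (- x).
Proof. by move=> hS hx; rewrite -scaleN1r; apply: subZ. Qed.
Lemma subB S x y : subspace S -> S x -> S y -> S (x - y).
Proof. by move=> hS hx hy; apply: subD => //; apply: subN. Qed.
Lemma sub_sum S n (f : 'I_n -> V) : subspace S -> (forall i, S (f i)) -> S (\sum_i f i).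
Proof.
move=> hS hf; apply: (big_ind S); first exact: sub0.
  by move=> ??; apply: subD.
by move=> i _; apply: hf.
Qed.
Lemma span_sub S n (b : 'I_n -> V) : subspace S -> (forall i, S (b i)) -> span b `<=` S.
Proof. by move=> hS hb x [c ->]; apply: sub_sum => // i; apply: subZ. Qed.
Lemma span_subspace n (b : 'I_n -> V) : subspace (span b).
Proof.
split; first by exists (fun=> 0); rewrite big1 // => i _; rewrite scale0r.
move=> a x y [c ->] [d ->]; exists (fun i => a * c i + d i).
rewrite scaler_sumr -big_split /=; apply: eq_bigr => i _.
by rewrite scalerDl scalerA.
Qed.
Lemma span_mem n (b : 'I_n -> V) i : span b (b i).
Proof.
exists (fun j => if j == i then 1 else 0).
rewrite (bigD1 i) //= eqxx scale1r big1 ?addr0 // => j /negbTE ->.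
by rewrite scale0r.
Qed.

Definition ext n (b : 'I_n -> V) (x : V) : 'I_n.+1 -> V :=
  fun i => oapp b x (unlift ord_max i).

Lemma ext_widen n (b : 'I_n -> V) x j : ext b x (widen_ord (leqnSn n) j) = b j.
Proof.
rewrite /ext; have -> : widen_ord (leqnSn n) j = lift ord_max j.
  by apply: val_inj; rewrite /= /bump leqNgt ltn_ord.
by rewrite liftK.
Qed.
Lemma ext_max n (b : 'I_n -> V) x : ext b x ord_max = x.
Proof. by rewrite /ext unlift_none. Qed.

Lemma sum_ext n (b : 'I_n -> V) x (c : 'I_n.+1 -> K) :
  \sum_(i < n.+1) c i *: ext b x i =
  \sum_(j < n) c (widen_ord (leqnSn n) j) *: b j + c ord_max *: x.
Proof.
rewrite big_ord_recr /= ext_max; congr (_ + _); apply: eq_bigr => j _.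
by rewrite ext_widen.
Qed.

Lemma ext_indep n (b : 'I_n -> V) x : indep b -> ~ span b x -> indep (ext b x).
Proof.
move=> ib nx c; rewrite sum_ext => hc.
have cm : c ord_max = 0.
  apply/eqP; apply/negP => /negP cn; apply: nx.
  exists (fun j => - (c ord_max)^-1 * c (widen_ord (leqnSn n) j)).
  have e : c ord_max *: x = - \sum_(j < n) c (widen_ord (leqnSn n) j) *: b j.
    by apply/eqP; rewrite -addr_eq0 addrC hc.
  rewrite -[x](scalerK cn) e scalerN scaler_sumr -sumrN; apply: eq_bigr => j _.
  by rewrite scalerA mulNr scaleNr.
move: hc; rewrite cm scale0r addr0 => /ib hc i.
case: (unliftP ord_max i) => [j ->|->] //.
have -> : lift ord_max j = widen_ord (leqnSn n) j.
  by apply: val_inj; rewrite /= /bump leqNgt ltn_ord.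
exact: hc.
Qed.

Lemma exists_dim S m : subspace S ->
  (forall k (b : 'I_k -> V), indep b -> (forall i, S (b i)) -> (k <= m)%N) ->
  exists2 n, (n <= m)%N & has_dim S n.
Proof.
move=> hS ub.
pose P := fun k => `[< exists b : 'I_k -> V, indep b /\ forall i, S (b i) >].
have exP : exists k, P k.
  exists 0%N; apply/asboolP; exists (fun=> 0); split; [by move=> c _; case|by case].
have ubP : forall k, P k -> (k <= m)%N.
  by move=> k /asboolP [b [ib bS]]; apply: (ub k b).
case: (ex_maxnP exP ubP) => n Pn mx.
exists n; first exact: ubP Pn.
move/asboolP: Pn => [b [ib bS]].
exists b; split => // x Sx.
apply: contrapT => nx.
have : P n.+1.
  apply/asboolP; exists (ext b x); split; first exact: ext_indep.
  by move=> i; rewrite /ext; case: (unlift _ i).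
by move/mx; rewrite ltnn.
Qed.

Lemma has_dim_uniq S n k : has_dim S n -> has_dim S k -> n = k.
Proof.
move=> [b [bS bi bsp]] [d [dS di dsp]]; apply/eqP; rewrite eqn_leq.
by rewrite (indep_le bi (fun j => dsp _ (bS j))) (indep_le di (fun j => bsp _ (dS j))).
Qed.

Lemma sdim_eq S n : has_dim S n -> sdim S = n.
Proof.
move=> h; rewrite /sdim; apply: (has_dim_uniq _ h).
by apply: xgetPex; exists n.
Qed.

Lemma sub_span_dim S m (b : 'I_m -> V) : subspace S -> S `<=` span b ->
  exists2 k, (k <= m)%N & has_dim S k.
Proof.
move=> hS sb; apply: exists_dim => // k c ic cS.
exact: (indep_le ic (fun j => sb _ (cS j))).
Qed.

Lemma sub_dim S (S' : set V) m : subspace S' -> S' `<=` S -> has_dim S m ->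
  exists2 k, (k <= m)%N & has_dim S' k.
Proof. by move=> hS' sub [b [_ _ bsp]]; apply: (sub_span_dim (b := b)) => // x /sub /bsp. Qed.

Lemma full_span S n (c : 'I_n -> V) : subspace S -> has_dim S n -> indep c ->
  (forall i, S (c i)) -> S `<=` span c.
Proof.
move=> hS [b [bS bi bsp]] ic cS x Sx; apply: contrapT => nx.
suff : (n.+1 <= n)%N by rewrite ltnn.
apply: (indep_le (ext_indep ic nx) (s := b)) => i; apply: bsp; rewrite /ext.
by case: (unlift _ i).
Qed.

Lemma eq_dim S (S' : set V) n : subspace S -> subspace S' -> S' `<=` S ->
  has_dim S n -> has_dim S' n -> S = S'.
Proof.
move=> hS hS' sub dS [c [cS ci csp]].
apply/seteqP; split => // x Sx.
have := full_span hS dS ci (fun i => sub _ (cS i)) Sx.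
exact: span_sub.
Qed.

Definition catf n m (b1 : 'I_n -> V) (b2 : 'I_m -> V) : 'I_(n + m) -> V :=
  fun i => match split i with inl j => b1 j | inr j => b2 j end.

Lemma split_l n m (j : 'I_n) : split (lshift m j) = inl j.
Proof. exact: (unsplitK (inl j : 'I_n + 'I_m)). Qed.
Lemma split_r n m (j : 'I_m) : split (rshift n j) = inr j.
Proof. exact: (unsplitK (inr j : 'I_n + 'I_m)). Qed.

Lemma sum_cat n m (b1 : 'I_n -> V) (b2 : 'I_m -> V) (c : 'I_(n + m) -> K) :
  \sum_i c i *: catf b1 b2 i =
  \sum_j c (lshift m j) *: b1 j + \sum_j c (rshift n j) *: b2 j.
Proof.
rewrite big_split_ord /catf; congr (_ + _); apply: eq_bigr => j _.
  by rewrite split_l.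
by rewrite split_r.
Qed.

Lemma span_cat n m (b1 : 'I_n -> V) (b2 : 'I_m -> V) x y :
  span b1 x -> span b2 y -> span (catf b1 b2) (x + y).
Proof.
move=> [c1 ->] [c2 ->].
exists (fun i => match split i with inl j => c1 j | inr j => c2 j end).
rewrite sum_cat; congr (_ + _); apply: eq_bigr => j _.
  by rewrite split_l.
by rewrite split_r.
Qed.

Lemma dsum_dim S A B n m : subspace S -> subspace A -> subspace B ->
  A `<=` S -> B `<=` S ->
  (forall x, S x -> exists a b, [/\ A a, B b & x = a + b]) ->
  (forall x, A x -> B x -> x = 0) ->
  has_dim A n -> has_dim B m -> has_dim S (n + m).
Proof.
move=> hS hA hB AS BS dec cap [b1 [b1A b1i b1s]] [b2 [b2B b2i b2s]].
exists (catf b1 b2); split.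
- by move=> i; rewrite /catf; case: (split i) => j; [apply: AS|apply: BS].
- move=> c; rewrite sum_cat => h.
  move: h; set a := \sum_(j < n) _; set b := \sum_(j < m) _ => h.
  have Aa : A a by apply: sub_sum => // j; apply: subZ.
  have Bb : B b by apply: sub_sum => // j; apply: subZ.
  have ea : a = - b by apply/eqP; rewrite -addr_eq0 h.
  have a0 : a = 0 by apply: cap => //; rewrite ea; apply: subN.
  have b0 : b = 0 by apply/eqP; rewrite -oppr_eq0 -ea a0.
  move=> i; rewrite -(splitK i); case: (split i) => j /=.
    exact: b1i a0 j.
  exact: b2i b0 j.
- move=> x /dec [a [b [Aa Bb ->]]].
  by apply: span_cat; [apply: b1s|apply: b2s].
Qed.

Lemma has_dim0 S : (forall x, S x -> x = 0) -> has_dim S 0.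
Proof.
move=> h; exists (fun=> 0); split; [by case|by move=> c _; case|].
by move=> x /h ->; exists (fun=> 0); rewrite big_ord0.
Qed.

Lemma has_dim0_inv S x : has_dim S 0 -> S x -> x = 0.
Proof. by move=> [b [_ _ bs]] /bs [c ->]; rewrite big_ord0. Qed.

End LinAlg.

Section Lin.
Variables (R : realType) (V : lmodType R[i]).
Local Notation K := (R[i]).
Implicit Types (S A B : set V) (x y : V).

Definition lin (u : V -> V) := forall (a : K) x y, u (a *: x + y) = a *: u x + u y.

Section L.
Variable u : V -> V.
Hypothesis hu : lin u.
Lemma lin0 : u 0 = 0.
Proof.
have := hu 1 0 0; rewrite !scale1r addr0 => e.
by apply: (addrI (u 0)); rewrite addr0 -e.
Qed.
Lemma linZ a x : u (a *: x) = a *: u x.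
Proof. by have := hu a x 0; rewrite !addr0 lin0 addr0. Qed.
Lemma linD x y : u (x + y) = u x + u y.
Proof. by have := hu 1 x y; rewrite !scale1r. Qed.
Lemma linN x : u (- x) = - u x.
Proof. by rewrite -scaleN1r linZ scaleN1r. Qed.
Lemma linB x y : u (x - y) = u x - u y.
Proof. by rewrite linD linN. Qed.
Lemma lin_sum n (c : 'I_n -> K) (b : 'I_n -> V) :
  u (\sum_i c i *: b i) = \sum_i c i *: u (b i).
Proof.
elim/big_rec2: _; first exact: lin0.
by move=> i y1 y2 _ <-; rewrite hu.
Qed.
Lemma range_subspace : subspace (range u).
Proof.
split; first by exists 0 => //; rewrite lin0.
by move=> a _ _ [x _ <-] [y _ <-]; exists (a *: x + y); rewrite // hu.
Qed.
Lemma image_subspace S : subspace S -> subspace (u @` S).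
Proof.
move=> hS; split; first by exists 0; [exact: sub0|rewrite lin0].
move=> a _ _ [x Sx <-] [y Sy <-]; exists (a *: x + y); last by rewrite hu.
by case: hS => _; apply.
Qed.
Lemma image_span n (b : 'I_n -> V) S : S `<=` span b -> u @` S `<=` span (fun i => u (b i)).
Proof. by move=> sb _ [x /sb [c ->] <-]; exists c; rewrite lin_sum. Qed.
End L.

Lemma lin_sub u v : lin u -> lin v -> lin (fun x => u x - v x).
Proof.
move=> hu hv a x y; rewrite hu hv scalerBr.
by rewrite addrACA opprD.
Qed.
Lemma lin_id : lin id. Proof. by []. Qed.

End Lin.

Section IP.
Variables (R : realType) (V : lmodType R[i]) (ip : V -> V -> R[i]).
Local Notation K := (R[i]).
Implicit Types (S A B : set V) (x y z : V).
Hypothesis ipl : forall (a : K) x y z, ip (a *: x + y) z = a * ip x z + ip y z.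
Hypothesis ips : forall x y, ip y x = (ip x y)^*.
Hypothesis ipd : forall x, ip x x = 0 -> x = 0.

Lemma ip0l z : ip 0 z = 0.
Proof.
have := ipl 1 0 0 z; rewrite scale1r addr0 mul1r => e.
by apply: (addrI (ip 0 z)); rewrite addr0 -e.
Qed.
Lemma ipZl a x z : ip (a *: x) z = a * ip x z.
Proof. by have := ipl a x 0 z; rewrite addr0 ip0l addr0. Qed.
Lemma ipDl x y z : ip (x + y) z = ip x z + ip y z.
Proof. by have := ipl 1 x y z; rewrite scale1r mul1r. Qed.
Lemma ipNl x z : ip (- x) z = - ip x z.
Proof. by rewrite -scaleN1r ipZl mulN1r. Qed.
Lemma ipBl x y z : ip (x - y) z = ip x z - ip y z.
Proof. by rewrite ipDl ipNl. Qed.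
Lemma ip0r z : ip z 0 = 0.
Proof. by rewrite ips ip0l conjC0. Qed.
Lemma ipZr a x z : ip z (a *: x) = a^* * ip z x.
Proof. by rewrite [LHS]ips ipZl rmorphM [ip z x]ips. Qed.
Lemma ipDr x y z : ip z (x + y) = ip z x + ip z y.
Proof. by rewrite [LHS]ips ipDl rmorphD [ip z x]ips [ip z y]ips. Qed.
Lemma ipNr x z : ip z (- x) = - ip z x.
Proof. by rewrite [LHS]ips ipNl rmorphN [ip z x]ips. Qed.
Lemma ipBr x y z : ip z (x - y) = ip z x - ip z y.
Proof. by rewrite ipDr ipNr. Qed.
Lemma ip_suml n (c : 'I_n -> K) (b : 'I_n -> V) z :
  ip (\sum_i c i *: b i) z = \sum_i c i * ip (b i) z.
Proof.
elim/big_rec2: _; first exact: ip0l.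
by move=> i y1 y2 _ <-; rewrite ipl.
Qed.
Lemma ip_sumr n (c : 'I_n -> K) (b : 'I_n -> V) z :
  ip z (\sum_i c i *: b i) = \sum_i (c i)^* * ip z (b i).
Proof.
elim/big_rec2: _; first exact: ip0r.
by move=> i y1 y2 _ <-; rewrite ipDr ipZr.
Qed.
Lemma ip_sym0 x y : ip x y = 0 -> ip y x = 0.
Proof. by move=> h; rewrite ips h conjC0. Qed.

Lemma orth_subspace S : subspace (orth ip S).
Proof.
split; first by move=> y _; rewrite ip0l.
by move=> a x y hx hy z Sz; rewrite ipl hx // hy // mulr0 addr0.
Qed.

Lemma orth_cap S x : S x -> orth ip S x -> x = 0.
Proof. by move=> Sx /(_ x Sx); apply: ipd. Qed.

Lemma proj_basis n (b : 'I_n -> V) x : indep b ->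
  exists2 y, span b y & orth ip (span b) (x - y).
Proof.
move=> ib.
pose M := \matrix_(i < n, j < n) ip (b i) (b j).
have Mu : M \in unitmx.
  rewrite -row_free_unit -kermx_eq0; apply/negP => /negP /rowV0Pn [v /sub_kermxP vM vn0].
  pose y := \sum_i v 0 i *: b i.
  have hy : forall j, ip y (b j) = 0.
    move=> j; have e : (v *m M) 0 j = 0 by rewrite vM mxE.
    rewrite ip_suml; apply: (etrans _ e); rewrite mxE.
    by apply: eq_bigr => i _; rewrite mxE.
  have y0 : y = 0.
    apply: ipd; rewrite {2}/y ip_sumr big1 // => j _; by rewrite hy mulr0.
  move/negP: vn0; apply; apply/eqP/matrixP => i j.
  by rewrite (ord1 i) mxE (ib _ y0).
pose r := \row_(j < n) ip x (b j).
pose c := r *m invmx M.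
have cM : c *m M = r by rewrite /c mulmxKV.
exists (\sum_i c 0 i *: b i); first by exists (fun i => c 0 i).
move=> _ [d ->]; rewrite ip_sumr big1 // => j _.
rewrite ipBl ip_suml.
have e : \sum_i c 0 i * ip (b i) (b j) = ip x (b j).
  have := congr1 (fun N : 'M_(_, _) => N 0 j) cM; rewrite /= !mxE => <-.
  by apply: eq_bigr => i _; rewrite ?mxE.
by rewrite e subrr mulr0.
Qed.

Lemma proj S n : subspace S -> has_dim S n -> forall x,
  exists2 y, S y & orth ip S (x - y).
Proof.
move=> hS [b [bS bi bsp]] x; have [y [c ->] hy] := proj_basis x bi.
exists (\sum_i c i *: b i); first by apply: sub_sum => // i; apply: subZ.
have e : S = span b.
  apply/seteqP; split => //; exact: span_sub.
by rewrite e; apply: hy; exists c.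
Qed.

Lemma orth_orth S n : subspace S -> has_dim S n -> orth ip (orth ip S) `<=` S.
Proof.
move=> hS dS x hx; have [y Sy hy] := proj hS dS x.
have : x - y = 0.
  apply: ipd; rewrite ipBl (hx _ hy) (ip_sym0 (hy y Sy)).
  by rewrite subr0.
by move/eqP; rewrite subr_eq0 => /eqP ->.
Qed.

End IP.

Section Part1.
Variables (R : realType) (V : lmodType R[i]) (ip : V -> V -> R[i]).
Local Notation K := (R[i]).
Implicit Types (S A B : set V) (x y z : V).
Hypothesis ipl : forall (a : K) x y z, ip (a *: x + y) z = a * ip x z + ip y z.
Hypothesis ips : forall x y, ip y x = (ip x y)^*.
Hypothesis ipd : forall x, ip x x = 0 -> x = 0.

Lemma span_dim m (c : 'I_m -> V) : exists2 k, (k <= m)%N & has_dim (span c) k.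
Proof. exact: (sub_span_dim (b := c) (span_subspace c) (fun x h => h)). Qed.

Lemma range_dim m (c : 'I_m -> V) (T : V -> V) : lin T ->
  (forall x, orth ip (span c) x -> T x = 0) ->
  exists2 k, (k <= m)%N & has_dim (range T) k.
Proof.
move=> hT h0; apply: (sub_span_dim (b := fun i => T (c i))); first exact: range_subspace.
have [k _ dk] := span_dim c.
move=> _ [x _ <-].
have [y yS hy] := proj ipl ips ipd (span_subspace c) dk x.
have -> : T x = T y by rewrite -[x](subrK y) linD // h0 // add0r.
by apply: (image_span hT (S := span c)) => //; exists y.
Qed.

Lemma dist_dim u v k : has_dim (range (fun x => u x - v x)) k -> dist u v = k.
Proof. exact: sdim_eq. Qed.

Lemma U0_range u v : U0 ip u -> U0 ip v ->
  exists k, has_dim (range (fun x => u x - v x)) k.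
Proof.
move=> [[lu _ _] [E1 [sE1 [n1 dE1] fu]]] [[lv _ _] [E2 [sE2 [n2 dE2] fv]]].
case: dE1 => [b1 [b1E b1i b1s]]; case: dE2 => [b2 [b2E b2i b2s]].
have h0 : forall x, orth ip (span (catf b1 b2)) x -> u x - v x = 0.
  move=> x hx; rewrite fu ?fv ?subrr //.
    move=> y /b2s Sy; apply: hx; rewrite -[y]add0r; apply: span_cat => //.
    exact: sub0 (span_subspace b1).
  move=> y /b1s Sy; apply: hx; rewrite -[y]addr0; apply: span_cat => //.
  exact: sub0 (span_subspace b2).
have [k _ dk] := range_dim (lin_sub lu lv) h0.
by exists k.
Qed.

Lemma dist0 u v : U0 ip u -> U0 ip v -> (dist u v = 0%N <-> u = v).
Proof.
move=> hu hv; split.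
  have [k dk] := U0_range hu hv; rewrite (dist_dim dk) => k0.
  move: dk; rewrite k0 => dk; apply: funext => x.
  apply/eqP; rewrite -subr_eq0; apply/eqP; apply: (has_dim0_inv dk).
  by exists x.
move=> <-; apply: dist_dim; apply: has_dim0 => _ [x _ <-]; exact: subrr.
Qed.

Lemma dist_sym u v : U0 ip u -> U0 ip v -> dist u v = dist v u.
Proof.
move=> [[lu _ _] _] [[lv _ _] _]; rewrite /dist /op_rank.
congr sdim; apply/seteqP; split => _ [x _ <-]; exists (- x) => //.
  by rewrite (linN lu) (linN lv) opprK addrC.
by rewrite (linN lu) (linN lv) opprK addrC.
Qed.

Lemma dist_tri u v w : U0 ip u -> U0 ip v -> U0 ip w ->
  (dist u w <= dist u v + dist v w)%N.
Proof.
move=> hu hv hw; move: (hu) (hw) => [[lu _ _] _] [[lw _ _] _].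
have [k1 d1] := U0_range hu hv; have [k2 d2] := U0_range hv hw.
rewrite (dist_dim d1) (dist_dim d2).
case: (d1) => [b1 [_ _ s1]]; case: (d2) => [b2 [_ _ s2]].
have sb : range (fun x => u x - w x) `<=` span (catf b1 b2).
  move=> _ [x _ <-].
  have -> : u x - w x = (u x - v x) + (v x - w x) by rewrite addrA subrK.
  by apply: span_cat; [apply: s1|apply: s2]; exists x.
have [k hk dk] := sub_span_dim (range_subspace (lin_sub lu lw)) sb.
by rewrite (dist_dim dk).
Qed.

End Part1.

Lemma subBB (W : zmodType) (x a b : W) : (x - b) - (x - a) = a - b.
Proof. by rewrite opprB addrC addrA subrK. Qed.

Section Part2.
Variables (R : realType) (V : lmodType R[i]) (ip : V -> V -> R[i]).
Local Notation K := (R[i]).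
Implicit Types (S A B : set V) (x y z : V).
Hypothesis ipl : forall (a : K) x y z, ip (a *: x + y) z = a * ip x z + ip y z.
Hypothesis ips : forall x y, ip y x = (ip x y)^*.
Hypothesis ipd : forall x, ip x x = 0 -> x = 0.
Let ip0l := ip0l ipl. Let ipZl := ipZl ipl. Let ipDl := ipDl ipl.
Let ipNl := ipNl ipl. Let ipBl := ipBl ipl.
Let ip0r := ip0r ipl ips. Let ipZr := ipZr ipl ips. Let ipDr := ipDr ipl ips.
Let ipNr := ipNr ipl ips. Let ipBr := ipBr ipl ips.

Lemma subI S A : subspace S -> subspace A -> subspace (S `&` A).
Proof.
move=> [h0 h] [k0 k]; split => // a x y [? ?] [? ?].
by split; [apply: h|apply: k].
Qed.

Lemma unit_stable S n w x : subspace S -> has_dim S n -> unitary ip w ->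
  fixes w (orth ip S) -> S x -> S (w x).
Proof.
move=> hS dS [lw iw _] fw Sx; apply: (orth_orth ipl ips ipd hS dS) => y hy.
by rewrite -(fw y hy) iw; apply: (ip_sym0 ips); exact: hy.
Qed.

Variables (E F : set V) (u : V -> V).
Hypotheses (sE : subspace E) (sF : subspace F) (FE : F `<=` E).
Hypotheses (nE nF : nat) (dE : has_dim E nE) (dF : has_dim F nF).
Hypotheses (uu : unitary ip u) (fu : fixes u (orth ip E)).

Let lu : lin u. Proof. by case: uu. Qed.
Let uip x y : ip (u x) (u y) = ip x y. Proof. by case: uu. Qed.
Let oE := orth ip E.
Let oF := orth ip F.
Let soF : subspace oF. Proof. exact: orth_subspace. Qed.
Let soE : subspace oE. Proof. exact: orth_subspace. Qed.

Let oEF : oE `<=` oF.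
Proof. by move=> x hx y /FE; apply: hx. Qed.

Let projE x : exists2 e, E e & oE (x - e).
Proof. exact: (proj ipl ips ipd sE dE x). Qed.
Let projF x : exists2 f, F f & oF (x - f).
Proof. exact: (proj ipl ips ipd sF dF x). Qed.

Let uE x : E x -> E (u x).
Proof. exact: unit_stable sE dE uu fu. Qed.

Let um1_proj x e : oE (x - e) -> u x - x = u e - e.
Proof.
move=> hr; rewrite -[x in u x](subrK e) linD // (fu hr).
by rewrite addrAC [x - e - x]addrAC subrr sub0r addrC.
Qed.

Let um1E x : E (u x - x).
Proof.
have [e Ee hr] := projE x.
rewrite (um1_proj hr).
by apply: subB => //; apply: uE.
Qed.

Let lum : lin (fun x => u x - x).
Proof. by move=> a x y; rewrite lu scalerBr addrACA opprD. Qed.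

Let M := [set u x - x | x in oF].
Let sM : subspace M.
Proof. exact: image_subspace lum _ soF. Qed.

Let FM0 y : F y -> M y -> y = 0.
Proof.
move=> Fy [g hg e].
have ug : u g = g + y by rewrite -e addrC subrK.
have hgy : ip g y = 0 by apply: hg.
have hyg : ip y g = 0 by apply: (ip_sym0 ips); apply: hg.
apply: ipd; have h := uip g g.
rewrite ug ipDl !ipDr hgy hyg add0r addr0 in h.
apply: (@addrI _ (ip g g)); by rewrite addr0.
Qed.

Let G := E `&` oF.
Let sG : subspace G. Proof. exact: subI. Qed.
Let Ks := [set x | E x /\ orth ip F x /\ u x = x].
Let sK : subspace Ks.
Proof.
split; first by split; [exact: sub0|split; [exact: sub0|exact: lin0]].
move=> a x y [Ex [ox ux]] [Ey [oy uy]]; split; first by case: sE => _; apply.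
split; first by case: soF => _; apply.
by rewrite lu ux uy.
Qed.

Let MG x : oF x -> exists2 g, G g & u x - x = u g - g.
Proof.
move=> ox; have [e Ee hr] := projE x; exists e; last exact: um1_proj.
split => //; have -> : e = x - (x - e) by rewrite opprB addrC subrK.
by apply: (subB soF) => //; apply: oEF.
Qed.

Lemma dimG : exists nG, has_dim G nG /\ nE = (nF + nG)%N.
Proof.
have [nG _ dG] := sub_dim sG (fun x (h : G x) => proj1 h) dE.
exists nG; split => //; apply: (has_dim_uniq dE).
apply: (dsum_dim sE sF sG FE (fun x (h : G x) => proj1 h)) => //.
- move=> x Ex; have [f Ff hf] := projF x; exists f, (x - f); split => //.
    by split => //; apply: subB => //; apply: FE.
  by rewrite addrC subrK.
- by move=> x Fx [_ ox]; apply: (orth_cap ipd Fx).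
Qed.

Lemma dimK : exists nK, has_dim Ks nK.
Proof.
have [nK _ dK] := sub_dim sK (fun x (h : Ks x) => proj1 h) dE.
by exists nK.
Qed.

Lemma dimM : exists nM, has_dim M nM.
Proof.
have MsubE : M `<=` E by move=> _ [y _ <-]; exact: um1E.
have [nM _ dM] := sub_dim sM MsubE dE.
by exists nM.
Qed.

Lemma rank_null nK nM : has_dim Ks nK -> has_dim M nM -> has_dim G (nK + nM).
Proof.
move=> dK [m [mM mi ms]].
have [gf hg] : exists gf : 'I_nM -> V, forall i, G (gf i) /\ u (gf i) - gf i = m i.
  have : forall i, exists g, G g /\ u g - g = m i.
    move=> i; have [x ox ex] := mM i; have [g Gg eg] := MG ox.
    by exists g; split => //; rewrite -eg.
  by move/choice => [gf hgf]; exists gf.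
have um_sum : forall c : 'I_nM -> K,
    u (\sum_i c i *: gf i) - \sum_i c i *: gf i = \sum_i c i *: m i.
  move=> c; rewrite (lin_sum lum); apply: eq_bigr => i _.
  by rewrite (proj2 (hg i)).
have sB := span_subspace gf.
have BG : span gf `<=` G by apply: span_sub => // i; exact: proj1 (hg i).
have dB : has_dim (span gf) nM.
  exists gf; split => //; first by move=> i; apply: span_mem.
  move=> c hc; apply: mi.
  by rewrite -um_sum hc lin0 // subrr.
apply: (dsum_dim sG sK sB (fun x (h : Ks x) => conj (proj1 h) (proj1 (proj2 h))) BG) => //.
- move=> x [Ex ox].
  have [c ec] := ms _ (ex_intro2 _ _ x ox erefl).
  exists (x - \sum_i c i *: gf i), (\sum_i c i *: gf i); split.
  + have Gb : G (\sum_i c i *: gf i) by apply: BG; exists c.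
    have Gk : G (x - \sum_i c i *: gf i) by apply: subB => //.
    case: Gk => Ek ok; split => //; split => //.
    apply/eqP; rewrite -subr_eq0; apply/eqP.
    have := linB lum x (\sum_i c i *: gf i); rewrite /= => ->.
    by rewrite um_sum -ec subrr.
  + by exists c.
  + by rewrite subrK.
- move=> x [_ [_ ux]] [c ec]; move: ux.
  rewrite ec => /eqP; rewrite -subr_eq0 um_sum => /eqP /mi h.
  by rewrite big1 // => i _; rewrite h scale0r.
Qed.

Let L := E `&` orth ip Ks.
Let sL : subspace L. Proof. exact: subI sE (orth_subspace _ _). Qed.

Lemma dimL nK : has_dim Ks nK -> exists nL, has_dim L nL /\ nE = (nK + nL)%N.
Proof.
move=> dK.
have [nL _ dL] := sub_dim sL (fun x (h : L x) => proj1 h) dE.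
exists nL; split => //; apply: (has_dim_uniq dE).
apply: (dsum_dim sE sK sL (fun x (h : Ks x) => proj1 h) (fun x (h : L x) => proj1 h)) => //.
- move=> x Ex; have [k Kk hk] := proj ipl ips ipd sK dK x.
  exists k, (x - k); split => //.
    by split => //; apply: subB => //; exact: proj1 Kk.
  by rewrite addrC subrK.
- by move=> x Kx [_ ox]; apply: (orth_cap ipd Kx).
Qed.

Let FMs := [set z | exists f m, [/\ F f, M m & z = f + m]].
Let sFM : subspace FMs.
Proof.
split; first by exists 0, 0; split; [exact: sub0|exact: sub0|rewrite addr0].
move=> a _ _ [f1 [m1 [F1 M1 ->]]] [f2 [m2 [F2 M2 ->]]].
exists (a *: f1 + f2), (a *: m1 + m2); split.
- by case: sF => _; apply.
- by case: sM => _; apply.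
- by rewrite scalerDr addrACA.
Qed.

Let FL : F `<=` L.
Proof.
move=> f Ff; split; first exact: FE.
by move=> k [_ [ok _]]; apply: (ip_sym0 ips); apply: ok.
Qed.

Let ML : M `<=` L.
Proof.
move=> _ [g _ <-]; split; first exact: um1E.
move=> k [_ [_ uk]].
by rewrite ipBl -{1}uk uip subrr.
Qed.

Let uL f : F f -> L (u f).
Proof.
move=> Ff; split; first by apply: uE; apply: FE.
move=> k [_ [ok uk]]; rewrite -uk uip.
by apply: (ip_sym0 ips); apply: ok.
Qed.

Lemma L_FM nK nM : has_dim Ks nK -> has_dim M nM -> L = FMs.
Proof.
move=> dK dM.
have [nG [dG eG]] := dimG.
have [nL [dL eL]] := dimL dK.
have dG' := rank_null dK dM.
have enG := has_dim_uniq dG dG'.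
have dFM : has_dim FMs nL.
  have -> : nL = (nF + nM)%N.
    by apply/eqP; rewrite -(eqn_add2l nK) -eL eG enG addnCA.
  have h1 : F `<=` FMs.
    by move=> f Ff; exists f, 0; split => //; [exact: sub0|rewrite addr0].
  have h2 : M `<=` FMs.
    by move=> m Mm; exists 0, m; split => //; [exact: sub0|rewrite add0r].
  have h3 : forall x, FMs x -> exists a b, [/\ F a, M b & x = a + b].
    by move=> _ [f [m [Ff Mm ->]]]; exists f, m.
  exact: (dsum_dim sFM sF sM h1 h2 h3 FM0 dF dM).
apply: (eq_dim sL sFM _ dL dFM).
move=> _ [f [m [Ff Mm ->]]]; apply: subD => //; [exact: FL|exact: ML].
Qed.

Let udec f : F f -> exists a, F a /\ M (u f - a).
Proof.
move=> Ff; have [nK dK] := dimK; have [nM dM] := dimM.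
have := uL Ff; rewrite (L_FM dK dM) => -[a [m [Fa Mm e]]].
by exists a; split => //; rewrite e addrC addKr.
Qed.

Let Q x z := exists f a, [/\ F f, oF (x - f), F a, M (u f - a) & z = a + (x - f)].

Let Q_ex x : exists z, Q x z.
Proof.
have [f Ff hf] := projF x; have [a [Fa Ma]] := udec Ff.
by exists (a + (x - f)), f, a.
Qed.

Let Q_uniq x z1 z2 : Q x z1 -> Q x z2 -> z1 = z2.
Proof.
move=> [f1 [a1 [F1 o1 Fa1 M1 ->]]] [f2 [a2 [F2 o2 Fa2 M2 ->]]].
have ef : f1 = f2.
  apply/eqP; rewrite -subr_eq0; apply/eqP; apply: (orth_cap ipd (S := F)).
    exact: (subB sF).
  have -> : f1 - f2 = (x - f2) - (x - f1) by rewrite subBB.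
  exact: (subB soF).
subst f2; congr (_ + _); apply/eqP; rewrite -subr_eq0; apply/eqP; apply: FM0.
  exact: (subB sF).
have -> : a1 - a2 = (u f1 - a2) - (u f1 - a1) by rewrite subBB.
exact: (subB sM).
Qed.

Let pp x := xget 0 (Q x).
Let Qp x : Q x (pp x). Proof. exact: xgetPex (Q_ex x). Qed.
Let pp_eq x z : Q x z -> pp x = z.
Proof. by move=> h; apply: Q_uniq (Qp x) h. Qed.

Let lpp : lin pp.
Proof.
move=> a x y; apply: pp_eq.
have [f1 [a1 [F1 o1 Fa1 M1 e1]]] := Qp x.
have [f2 [a2 [F2 o2 Fa2 M2 e2]]] := Qp y.
exists (a *: f1 + f2), (a *: a1 + a2); split.
- by case: sF => _; apply.
- have -> : a *: x + y - (a *: f1 + f2) = a *: (x - f1) + (y - f2).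
    by rewrite scalerBr opprD addrACA.
  by case: soF => _; apply.
- by case: sF => _; apply.
- have -> : u (a *: f1 + f2) - (a *: a1 + a2) = a *: (u f1 - a1) + (u f2 - a2).
    by rewrite lu scalerBr opprD addrACA.
  by case: sM => _; apply.
- rewrite e1 e2 scalerDr scalerBr addrACA; congr (_ + _).
  by rewrite opprD addrACA.
Qed.

Lemma vec_id (x y z : V) : x - y = z -> y = x - z.
Proof. by move=> <-; rewrite opprB addrC subrK. Qed.

Let key f1 f2 a1 a2 g1 g2 : F f1 -> F f2 -> F a1 -> F a2 -> oF g1 -> oF g2 ->
  u f1 - a1 = u g1 - g1 -> u f2 - a2 = u g2 - g2 -> ip a1 a2 = ip f1 f2.
Proof.
move=> F1 F2 Fa1 Fa2 o1 o2 /vec_id ea1 /vec_id ea2.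
have z1 : ip a1 g2 = 0 by apply: (ip_sym0 ips); apply: o2.
have z2 : ip g1 a2 = 0 by apply: o1.
have z3 : ip g1 f2 = 0 by apply: o1.
have z4 : ip f1 g2 = 0 by apply: (ip_sym0 ips); apply: o2.
have t1 : ip a1 a2 = ip a1 (u f2) - (ip a1 (u g2) - ip a1 g2).
  by rewrite {1}ea2 !ipBr.
have t2 : ip a1 (u f2) = ip f1 f2 - (ip g1 f2 - ip g1 (u f2)).
  by rewrite ea1 !ipBl !uip.
have t3 : ip a1 (u g2) = ip f1 g2 - (ip g1 g2 - ip g1 (u g2)).
  by rewrite ea1 !ipBl !uip.
have t4 : ip g1 a2 = ip g1 (u f2) - (ip g1 (u g2) - ip g1 g2).
  by rewrite ea2 !ipBr.
rewrite t1 t2 t3 z1 z3 z4; move: t4; rewrite z2 => /eqP; rewrite eq_sym subr_eq0 => /eqP ->.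
ring.
Qed.

Let pp_fix x : oF x -> pp x = x.
Proof.
move=> ox; apply: pp_eq; exists 0, 0; split.
- exact: sub0.
- by rewrite subr0.
- exact: sub0.
- by rewrite lin0 // subr0; exact: sub0.
- by rewrite subr0 add0r.
Qed.

Let pp_F x : F x -> F (pp x).
Proof.
move=> Fx; have [f [a [Ff o Fa Ma ->]]] := Qp x.
have -> : x - f = 0.
  by apply: (orth_cap ipd (S := F)) => //; apply: (subB sF).
by rewrite addr0.
Qed.

Let pp_range x : M (u x - pp x).
Proof.
have [f [a [Ff o Fa Ma ->]]] := Qp x.
have -> : u x - (a + (x - f)) = (u f - a) + (u (x - f) - (x - f)).
  rewrite (linB lu) opprD addrA [RHS]addrA; congr (_ - _).
  by rewrite [RHS]addrC [RHS]addrA subrK.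
apply: subD => //; by exists (x - f).
Qed.

Let pp_ip x y : ip (pp x) (pp y) = ip x y.
Proof.
have [f1 [a1 [F1 o1 Fa1 M1 e1]]] := Qp x.
have [f2 [a2 [F2 o2 Fa2 M2 e2]]] := Qp y.
case: M1 => g1 og1 eg1; case: M2 => g2 og2 eg2.
have k := key F1 F2 Fa1 Fa2 og1 og2 (esym eg1) (esym eg2).
have ex : x = f1 + (x - f1) by rewrite addrC subrK.
have ey : y = f2 + (y - f2) by rewrite addrC subrK.
rewrite e1 e2 [in RHS]ex [in RHS]ey.
move: o1 o2; move: (x - f1) (y - f2) => r1 r2 o1 o2.
rewrite !ipDl !ipDr k.
have -> : ip a1 r2 = 0 by apply: (ip_sym0 ips); apply: o2.
have -> : ip r1 a2 = 0 by apply: o1.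
have -> : ip f1 r2 = 0 by apply: (ip_sym0 ips); apply: o2.
have -> : ip r1 f2 = 0 by apply: o1.
by [].
Qed.

Let pp_surj y : exists x, pp x = y.
Proof.
case: (dF) => [b [bF bi bs]].
have ci : indep (fun i => pp (b i)).
  move=> c hc; apply: bi; apply: ipd.
  by rewrite -pp_ip (lin_sum lpp) hc ip0l.
have sp := full_span sF dF ci (fun i => pp_F (bF i)).
have [f Ff hf] := projF y.
have [c ec] := sp _ Ff.
exists (\sum_i c i *: b i + (y - f)).
by rewrite (linD lpp) (lin_sum lpp) -ec pp_fix // addrC subrK.
Qed.

Lemma pi_exists : exists w, is_piEF ip E F u w.
Proof.
exists pp; split.
- by split; [exact: lpp|exact: pp_ip|exact: pp_surj].
- exact: pp_fix.
- by move=> _ [x _ <-]; apply: pp_range.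
Qed.

Lemma pi_uniq w1 w2 : is_piEF ip E F u w1 -> is_piEF ip E F u w2 -> w1 = w2.
Proof.
move=> [u1 f1 r1] [u2 f2 r2]; apply: funext => x.
have [f Ff hf] := projF x.
have l1 : lin w1 by case: u1.
have l2 : lin w2 by case: u2.
rewrite -[x](subrK f) (linD l1) (linD l2) (f1 _ hf) (f2 _ hf); congr (_ + _).
apply/eqP; rewrite -subr_eq0; apply/eqP; apply: FM0.
  by apply: (subB sF) => //; apply: (unit_stable sF dF).
have -> : w1 f - w2 f = (u f - w2 f) - (u f - w1 f).
  by rewrite subBB.
by apply: (subB sM) => //; [apply: r2|apply: r1]; exists f.
Qed.

Lemma unitary_lin w : unitary ip w -> lin w /\ True.
Proof. by case. Qed.

Let range_dist w k : has_dim (range (fun x => u x - w x)) k -> dist u w = k.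
Proof. exact: sdim_eq. Qed.

Let M_sub w : fixes w oF -> M `<=` range (fun x => u x - w x).
Proof. by move=> fw _ [x ox <-]; exists x => //; rewrite fw. Qed.

Let range_w_dim w : unitary ip w -> fixes w oF ->
  exists k, has_dim (range (fun x => u x - w x)) k.
Proof.
move=> [lw _ _] fw; case: (dE) => [b [bE bi bs]].
have h0 : forall x, orth ip (span b) x -> u x - w x = 0.
  move=> x hx; have oEx : oE x by move=> y /bs; apply: hx.
  by rewrite fu // fw ?subrr //; apply: oEF.
have [k _ dk] := range_dim ipl ips ipd (lin_sub lu lw) h0.
by exists k.
Qed.

Lemma part2 :
     let p := piEF ip E F u in
     let K := [set x | E x /\ orth ip F x /\ u x = x] in
     [/\ unitary ip p /\ fixes p (orth ip F),
         (forall w, unitary ip w -> fixes w (orth ip F) -> (dist u p <= dist u w)%N),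
         (forall w, unitary ip w -> fixes w (orth ip F) -> dist u w = dist u p -> w = p),
         range (fun x => u x - p x) = (fun x => u x - x) @` (orth ip F) &
         (((dist u p)%:Z = (sdim E)%:Z - (sdim F)%:Z - (sdim K)%:Z)%R /\
          ((forall x, K x -> x = 0) -> (dist u p)%:Z = (sdim E)%:Z - (sdim F)%:Z)%R)].
Proof.
move=> p K0.
have hp : is_piEF ip E F u p by apply: epsilon_spec; exact: pi_exists.
have [nK dK] := dimK; have [nM dM] := dimM.
have [nG [dG eG]] := dimG.
have enG := has_dim_uniq dG (rank_null dK dM).
have rM : range (fun x => u x - p x) = M.
  case: (hp) => _ fp rp; apply/seteqP; split => // _ [x ox <-].
  by exists x => //; rewrite fp.
have dp : dist u p = nM by apply: range_dist; rewrite rM.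
have mn : forall w, unitary ip w -> fixes w oF -> (dist u p <= dist u w)%N.
  move=> w uw fw; have [k dk] := range_w_dim uw fw.
  rewrite dp (range_dist dk).
  have [k' lk dk'] := sub_dim sM (M_sub fw) dk.
  by rewrite (has_dim_uniq dM dk').
split => //.
- by case: hp.
- move=> w uw fw e; apply: (pi_uniq _ hp).
  have [k dk] := range_w_dim uw fw.
  move: e; rewrite dp (range_dist dk) => ek; move: dk; rewrite ek => dk.
  have eR := eq_dim (range_subspace (lin_sub lu (proj1 (unitary_lin uw)))) sM (M_sub fw) dk dM.
  by split => //; rewrite eR.
- have ef : (sdim E)%:Z - (sdim F)%:Z - (sdim K0)%:Z = nM%:Z.
    rewrite (sdim_eq dE) (sdim_eq dF) (sdim_eq dK) eG enG !PoszD.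
    ring.
  split; first by rewrite ef dp.
  move=> h0; have dK0 : has_dim Ks 0 by exact: has_dim0.
  move: ef; rewrite (sdim_eq dK0) subr0 => ->; by rewrite dp.
Qed.

End Part2.

Theorem proposition2p2 (R : realType) (V : lmodType R[i]) (ip : V -> V -> R[i])
  (hH : hilbert_space ip) :
  (* d is a well-defined nat-valued distance on U_0(H) *)
  [/\ (forall u v, U0 ip u -> U0 ip v -> findim (range (fun x => u x - v x))),
      (forall u v, U0 ip u -> U0 ip v -> (dist u v = 0%N <-> u = v)),
      (forall u v, U0 ip u -> U0 ip v -> dist u v = dist v u) &
      (forall u v w, U0 ip u -> U0 ip v -> U0 ip w ->
         (dist u w <= dist u v + dist v w)%N)] /\
  (forall (E F : set V) (u : V -> V),
     subspace E -> findim E -> subspace F -> findim F -> F `<=` E ->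
     unitary ip u -> fixes u (orth ip E) ->
     let p := piEF ip E F u in
     let K := [set x | E x /\ orth ip F x /\ u x = x] in
     [/\ unitary ip p /\ fixes p (orth ip F),
         (* p is the unique minimizer of d(u, .) among unitaries fixing F^perp *)
         (forall w, unitary ip w -> fixes w (orth ip F) -> (dist u p <= dist u w)%N),
         (forall w, unitary ip w -> fixes w (orth ip F) -> dist u w = dist u p -> w = p),
         range (fun x => u x - p x) = (fun x => u x - x) @` (orth ip F) &
         (((dist u p)%:Z = (sdim E)%:Z - (sdim F)%:Z - (sdim K)%:Z)%R /\
          ((forall x, K x -> x = 0) -> (dist u p)%:Z = (sdim E)%:Z - (sdim F)%:Z)%R)]).
Proof.
case: hH => ipl ips _ ipd _.
split.
  split.
  - by move=> u v hu hv; have [k dk] := U0_range ipl ips ipd hu hv; exists k.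
  - exact: dist0 ipl ips ipd.
  - exact: dist_sym.
  - exact: dist_tri ipl ips ipd.
move=> E F u sE [nE dE] sF [nF dF] FE uu fu.
exact: (part2 ipl ips ipd sE sF FE dE dF uu fu).
Qed.
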